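(* Let $A$ and $B$ be $n\times n$ binary matrices (entries in $\mathbb{Z}_2$) with zero diagonal. The facets-pairing structures $\mathcal{F}_A$ and $\mathcal{F}_B$ on $\mathcal{C}^n$ are equivalent if and only if there is an $n\times n$ permutation matrix $P$ with $B=P^{-1}AP$.
   Context: $[\pm n]=\{\pm1,\dots,\pm n\}$, $\mathcal{C}^n=\{x\in\mathbb{R}^n: -\tfrac14\le x_i\le\tfrac14\}$; $\mathbf{F}(i)$, $\mathbf{F}(-i)$ ($1\le i\le n$) are the facets in $\{x_i=\tfrac14\}$, $\{x_i=-\tfrac14\}$. For a binary matrix $A$ write $A^i_k$ for its $(i,k)$ entry (viewed as $0$ or $1$). The facets-pairing structure $\mathcal{F}_A$ pairs $\mathbf{F}(j)$ with $\mathbf{F}(-j)$ via $\tau^A_j:\mathbf{F}(j)\to\mathbf{F}(-j)$, $\tau^A_j(x_1,\dots,x_n)=(y_1,\dots,y_n)$ with $y_{|j|}=-x_{|j|}$ and $y_k=(-1)^{A^{|j|}_k}x_k$ for $k\ne|j|$. Two facets-pairing structures given by pairings $\mathbf{F}(j)\mapsto\mathbf{F}(\omega(j))$ with maps $\tau_j$, and $\mathbf{F}(j)\mapsto\mathbf{F}(\omega'(j))$ with maps $\tau'_j$, are equivalent if there is a symmetry $h$ of $\mathcal{C}^n$ (Euclidean isometry preserving $\mathcal{C}^n$) such that $\tau_j=h^{-1}\circ\tau'_{j'}\circ h$ on $\mathbf{F}(j)$ for every $j\in[\pm n]$, where $\mathbf{F}(j')=h(\mathbf{F}(j))$. *)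

(* Defs.v *)
(* The ambient field is an arbitrary real field R
   (the paper's R is the instance R = the real numbers). *)
From HB Require Import structures.
From mathcomp Require Import all_boot all_order all_algebra all_fingroup.
Set Implicit Arguments. Unset Strict Implicit. Unset Printing Implicit Defensive.
Import Order.TTheory GRing.Theory Num.Theory.
Local Open Scope ring_scope.

Section Cube.
Variables (R : realFieldType) (n : nat).

Definition sqnorm (v : 'rV[R]_n) : R := \sum_(i < n) (v 0 i) ^+ 2.

Definition isometry (h : 'rV[R]_n -> 'rV[R]_n) : Prop :=
  forall x y, sqnorm (h x - h y) = sqnorm (x - y).

Definition inCube (x : 'rV[R]_n) : Prop :=
  forall i, - (4%:R)^-1 <= x 0 i <= (4%:R)^-1.

Definition cube_symmetry (h : 'rV[R]_n -> 'rV[R]_n) : Prop :=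
  isometry h /\
  (forall y, inCube y <-> exists x, inCube x /\ h x = y).

(* Signed indices [±n]: (false, i) is +(i+1), (true, i) is -(i+1). *)
Definition sidx := (bool * 'I_n)%type.

Definition inFacet (j : sidx) (x : 'rV[R]_n) : Prop :=
  inCube x /\ x 0 j.2 = (if j.1 then - (4%:R)^-1 else (4%:R)^-1).

(* A facets-pairing structure: a pairing omega of [±n] and maps tau j
   (tau j is meant as a map F(j) -> F(omega j); it is given as a map on
   R^n, only its restriction to F(j) matters). *)
Record pairing := Pairing {
  omega : sidx -> sidx;
  tau : sidx -> 'rV[R]_n -> 'rV[R]_n }.

Definition tauA (A : 'M['F_2]_n) (j : sidx) (x : 'rV[R]_n) : 'rV[R]_n :=
  \row_k (if k == j.2 then - x 0 k
          else if A j.2 k != 0 then - x 0 k else x 0 k).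

Definition pairingA (A : 'M['F_2]_n) : pairing :=
  Pairing (fun j => (~~ j.1, j.2)) (tauA A).

(* Equivalence of facets-pairing structures: a symmetry h such that for
   every j, h(F(j)) = F(j') and tau_j = h^-1 o tau'_j' o h on F(j)
   (equivalently, h o tau_j = tau'_j' o h on F(j), h being bijective). *)
Definition equiv_pairing (S S' : pairing) : Prop :=
  exists h, cube_symmetry h /\
    forall j : sidx, exists j' : sidx,
      (forall y, inFacet j' y <-> exists x, inFacet j x /\ h x = y) /\
      (forall x, inFacet j x -> h (tau S j x) = tau S' j' (h x)).

End Cube.

(* Main.v *)
Require Import Defs.
From Stdlib Require Import ClassicalEpsilon.
From HB Require Import structures.
From mathcomp Require Import all_boot all_order all_algebra all_fingroup.
Import Order.TTheory GRing.Theory Num.Theory.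
Set Implicit Arguments. Unset Strict Implicit.
Local Open Scope ring_scope.

Section Lin.
Variables (R : realFieldType) (n : nat).
Implicit Types u v w : 'rV[R]_n.

Definition dot u v : R := \sum_i u 0 i * v 0 i.

Lemma sqnormE u : sqnorm u = dot u u.
Proof. by rewrite /sqnorm /dot; apply: eq_bigr => i _; rewrite expr2. Qed.
Lemma dotC u v : dot u v = dot v u.
Proof. by apply: eq_bigr => i _; rewrite mulrC. Qed.
Lemma dotDl u v w : dot (u + v) w = dot u w + dot v w.
Proof. by rewrite /dot -big_split; apply: eq_bigr => i _; rewrite mxE mulrDl. Qed.
Lemma dotNl u v : dot (- u) v = - dot u v.
Proof. by rewrite /dot -sumrN; apply: eq_bigr => i _; rewrite mxE mulNr. Qed.
Lemma dotZl a u v : dot (a *: u) v = a * dot u v.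
Proof. by rewrite /dot mulr_sumr; apply: eq_bigr => i _; rewrite mxE mulrA. Qed.
Lemma dotDr u v w : dot w (u + v) = dot w u + dot w v.
Proof. by rewrite dotC dotDl !(dotC w). Qed.
Lemma dotNr u v : dot v (- u) = - dot v u.
Proof. by rewrite dotC dotNl dotC. Qed.
Lemma dotZr a u v : dot v (a *: u) = a * dot v u.
Proof. by rewrite dotC dotZl dotC. Qed.

Lemma sqnormB u v : sqnorm (u - v) = sqnorm u + sqnorm v - (dot u v) *+ 2.
Proof.
rewrite !sqnormE dotDl !dotDr !dotNl !dotNr opprK (dotC v u) mulr2n opprD.
by rewrite (addrC (- dot u v) (dot v v)) addrACA.
Qed.

Lemma sqnorm_eq0 u : sqnorm u = 0 -> u = 0.
Proof.
move=> H; apply/rowP => i; rewrite mxE.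
have: \sum_(i < n) u 0 i ^+ 2 == 0 by apply/eqP.
rewrite psumr_eq0 => [/allP/(_ i (mem_index_enum i))|j _]; last exact: sqr_ge0.
by rewrite /= sqrf_eq0 => /eqP.
Qed.

Lemma sqnorm0 : sqnorm (0 : 'rV[R]_n) = 0.
Proof. by rewrite /sqnorm big1 // => i _; rewrite mxE expr0n. Qed.

Lemma cancel2 (a d1 d2 : R): a - d1 *+ 2 = a - d2 *+ 2 -> d1 = d2.
Proof.
move/addrI/oppr_inj.
have two : (2%:R : R) != 0 by rewrite pnatr_eq0.
rewrite -[d1 *+ 2]mulr_natr -[d2 *+ 2]mulr_natr. exact: (mulIf two).
Qed.

Variable h : 'rV[R]_n -> 'rV[R]_n.
Hypothesis Hiso : Defs.isometry h.
Definition gg v := h v - h 0.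

Lemma ggB u v : gg u - gg v = h u - h v.
Proof. by rewrite /gg opprB addrA subrK. Qed.

Lemma gg_norm u : sqnorm (gg u) = sqnorm u.
Proof. by rewrite /gg Hiso subr0. Qed.

Lemma gg_polar u v : dot (gg u) (gg v) = dot u v.
Proof.
have := Hiso u v. rewrite -ggB (sqnormB (gg u)) (sqnormB u) !gg_norm.
exact: cancel2.
Qed.

Section Abs.
Variable g : 'rV[R]_n -> 'rV[R]_n.
Hypothesis Hp : forall u v, dot (g u) (g v) = dot u v.

Lemma g_exp a z u v :
  dot (g z - a *: g u - g v) (g z - a *: g u - g v) =
  dot (z - a *: u - v) (z - a *: u - v).
Proof.
by rewrite !dotDl !dotDr !dotNl !dotNr !dotZl !dotZr !Hp.
Qed.

Lemma g_lin a u v : g (a *: u + v) = a *: g u + g v.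
Proof.
have := g_exp a (a *: u + v) u v.
rewrite (addrC (a *: u) v) addrK subrr -!sqnormE sqnorm0 => /sqnorm_eq0.
by move/eqP; rewrite -addrA -opprD subr_eq0 => /eqP.
Qed.
End Abs.

Lemma gg_lin a u v : gg (a *: u + v) = a *: gg u + gg v.
Proof. exact: (@g_lin gg gg_polar a u v). Qed.

Lemma gg0 : gg 0 = 0.
Proof. by rewrite /gg subrr. Qed.
Lemma ggD u v : gg (u + v) = gg u + gg v.
Proof. by have := gg_lin 1 u v; rewrite !scale1r. Qed.
Lemma ggZ a u : gg (a *: u) = a *: gg u.
Proof. by have := gg_lin a u 0; rewrite !addr0 gg0 addr0. Qed.
Lemma ggN u : gg (- u) = - gg u.
Proof. by rewrite -scaleN1r ggZ scaleN1r. Qed.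
Lemma ggBB u v : gg (u - v) = gg u - gg v.
Proof. by rewrite ggD ggN. Qed.
Lemma gg_sum v : gg v = \sum_k v 0 k *: gg 'e_k.
Proof.
rewrite {1}(row_sum_delta v).
rewrite (big_morph gg ggD gg0); apply: eq_bigr => k _; exact: ggZ.
Qed.

End Lin.

Section Main.
Variables (R : realFieldType) (n : nat).

Definition cc : R := (4%:R)^-1.
Lemma cc_gt0 : 0 < cc.
Proof. by rewrite invr_gt0 ltr0n. Qed.
Lemma cc0 : cc != 0.
Proof. exact: lt0r_neq0 cc_gt0. Qed.

Lemma cube_pm (v : 'rV[R]_n) :
  (forall l, v 0 l = 0 \/ v 0 l = cc \/ v 0 l = - cc) -> inCube v.
Proof.
move=> H l; have c0 := cc_gt0.
have [[[[c1 c2] c3] _] _] := gt0_cp c0.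
rewrite -/cc; by case: (H l) => [->|[->|->]]; rewrite ?c1 ?c2 ?c3 //= ?andbT lexx.
Qed.

Lemma e_entry (k l : 'I_n) (a : R) : (a *: ('e_k : 'rV[R]_n)) 0 l = if l == k then a else 0.
Proof. by rewrite !mxE eqxx /=; case: (l == k); rewrite /= ?mulr1 ?mulr0. Qed.

Lemma entryB (X Y : 'rV[R]_n) r : (X - Y) 0 r = X 0 r - Y 0 r.
Proof. by rewrite !mxE. Qed.
Lemma entryZ a (X : 'rV[R]_n) r : (a *: X) 0 r = a * X 0 r.
Proof. by rewrite !mxE. Qed.

Definition sgn (M : 'M['F_2]_n) (p r : 'I_n) : R :=
  if r == p then -1 else if M p r != 0 then -1 else 1.

Lemma tauAE (M : 'M['F_2]_n) (j : sidx n) (v : 'rV[R]_n) r :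
  (tauA M j v) 0 r = sgn M j.2 r * v 0 r.
Proof.
rewrite /tauA mxE /sgn; case: (r == j.2); rewrite ?mulN1r //.
by case: (M j.2 r != 0); rewrite ?mulN1r ?mul1r.
Qed.

Lemma tauA_B (M : 'M['F_2]_n) (j : sidx n) (u v : 'rV[R]_n) :
  tauA M j (u - v) = tauA M j u - tauA M j v.
Proof.
apply/rowP => r; rewrite tauAE.
have E1 : (u - v) 0 r = u 0 r - v 0 r by rewrite !mxE.
have E2 : forall X Y : 'rV[R]_n, (X - Y) 0 r = X 0 r - Y 0 r by move=> X Y; rewrite !mxE.
by rewrite E1 E2 !tauAE mulrBr.
Qed.

Lemma neqN11 : (-1 : R) != 1.
Proof.
apply/eqP => H; have : (2%:R : R) == 0 by rewrite mulr2n -{1}H addNr.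
by rewrite pnatr_eq0.
Qed.

Lemma ccN : cc != - cc.
Proof.
apply/eqP => H; have := cc_gt0; rewrite {1}H oppr_gt0 => H2.
by have := lt_trans H2 cc_gt0; rewrite ltxx.
Qed.

End Main.
Arguments cc {R}.
Arguments cc_gt0 {R}.
Arguments cc0 {R}.
Arguments neqN11 {R}.
Arguments ccN {R}.


Lemma F2eq : forall a b : 'F_2, (a != 0) = (b != 0) -> a = b.
Proof.
move=> [[|[|?]] ?] [[|[|?]] ?] //=.
all: try by move=> _; apply/val_inj.
Qed.

Section Fwd.
Variables (R : realFieldType) (n : nat).

Lemma fwd (A B : 'M['F_2]_n) : (forall i, A i i = 0) -> (forall i, B i i = 0) ->
  equiv_pairing (pairingA R A) (pairingA R B) ->
  exists s : 'S_n, forall i k, B (s i) (s k) = A i k.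
Proof.
move=> HA HB [h [[Hiso Hsurj] Hj]].
have [g hg] : exists g : 'rV[R]_n -> 'rV[R]_n, forall v, g v = h v - h 0
  by exists (gg h).
have gB : forall u v, g u - g v = h u - h v by move=> u v; rewrite !hg; exact: ggB.
have gBB : forall u v, g (u - v) = g u - g v by move=> u v; rewrite !hg; exact: ggBB.
have gZ : forall a u, g (a *: u) = a *: g u by move=> a u; rewrite !hg; exact: ggZ.
have gS : forall v, g v = \sum_k v 0 k *: g 'e_k.
  by move=> v; transitivity (gg h v); [exact: hg | rewrite (gg_sum Hiso); apply: eq_bigr => k _; rewrite hg].
have c0 := @cc0 R.
have key : forall i : 'I_n, exists r : 'I_n,
  (forall k, k != i -> g 'e_k 0 r = 0) /\
  (forall k r', k != i -> g 'e_k 0 r' != 0 -> r' != r ->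
      (A i k != 0) = (B r r' != 0)).
{ move=> i. have [j' [Hfac Hcom]] := Hj (false, i).
  exists j'.2.
  pose x : 'rV[R]_n := cc *: 'e_i.
  have Fx : inFacet (false, i) x.
    split; last by rewrite /x e_entry eqxx.
    by apply: cube_pm => l; rewrite /x e_entry; case: (l == i); auto.
  have Fy : forall k, k != i -> inFacet (false, i) (x + cc *: 'e_k).
    move=> k ki; split; last by rewrite mxE /x !e_entry eqxx eq_sym (negbTE ki) addr0.
    apply: cube_pm => l; rewrite mxE /x !e_entry.
    case: (eqVneq l i) => [->|li]; first by rewrite eq_sym (negbTE ki) addr0; auto.
    by rewrite add0r; case: (l == k); auto.
  have hF : forall y, inFacet (false, i) y ->
      (h y) 0 j'.2 = (if j'.1 then - (4%:R)^-1 else (4%:R)^-1).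
    by move=> y Fy0; exact: ((Hfac (h y)).2 (ex_intro _ y (conj Fy0 erefl))).2.
  have diff : forall k, (x + cc *: 'e_k) - x = cc *: 'e_k.
    by move=> k; rewrite addrC addKr.
  split.
  - move=> k ki.
    have := congr1 (fun w : 'rV[R]_n => w 0 j'.2) (gB (x + cc *: 'e_k) x).
    rewrite -gBB diff gZ /= entryZ entryB (hF _ (Fy k ki)) (hF _ Fx) subrr.
    by move/eqP; rewrite mulf_eq0 (negbTE c0) /= => /eqP.
  - move=> k r' ki nz ne.
    have e1 := Hcom _ (Fy k ki); have e2 := Hcom _ Fx.
    have E : h (tauA A (false, i) (x + cc *: 'e_k)) - h (tauA A (false, i) x) =
             tauA B j' (h (x + cc *: 'e_k)) - tauA B j' (h x)
      by rewrite [LHS]/= e1 e2.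
    rewrite -tauA_B -gB -gBB -tauA_B diff -gB -gBB diff gZ in E.
    have T : tauA A (false, i) (cc *: 'e_k) = (cc * @sgn R n A i k) *: 'e_k.
      apply/rowP => l; rewrite tauAE !e_entry /=.
      by case: (eqVneq l k) => [->|lk]; rewrite ?mulr0 // mulrC.
    rewrite T gZ in E.
    have := congr1 (fun w : 'rV[R]_n => w 0 r') E.
    rewrite /= tauAE !entryZ -mulrA mulrCA => /(mulIf (mulf_neq0 c0 nz)).
    rewrite /sgn (negbTE ki) (negbTE ne).
    case: (A i k != 0); case: (B j'.2 r' != 0) => // H.
    + by move: (@neqN11 R); rewrite H eqxx.
    + by move: (@neqN11 R); rewrite -H eqxx. }
have [phi Hphi] : exists phi : 'I_n -> 'I_n, forall i,
  (forall k, k != i -> g 'e_k 0 (phi i) = 0) /\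
  (forall k r', k != i -> g 'e_k 0 r' != 0 -> r' != phi i ->
      (A i k != 0) = (B (phi i) r' != 0)).
  exists (fun i => proj1_sig (constructive_indefinite_description _ (key i))).
  by move=> i; exact: (proj2_sig (constructive_indefinite_description _ (key i))).
have phi_inj : injective phi.
  move=> i1 i2 E; apply/eqP; apply/negPn/negP => ne.
  have Z : forall k, g 'e_k 0 (phi i1) = 0.
    move=> k; case: (eqVneq k i1) => [->|ki1]; last exact: (Hphi i1).1.
    by rewrite E; apply: (Hphi i2).1.
  have Zv : forall v, g v 0 (phi i1) = 0.
    by move=> v; rewrite gS summxE big1 // => k _; rewrite mxE Z mulr0.
  have C1 : inCube (cc *: ('e_(phi i1) : 'rV[R]_n)).
    by apply: cube_pm => l; rewrite e_entry; case: (l == _); auto.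
  have C2 : inCube ((- cc) *: ('e_(phi i1) : 'rV[R]_n)).
    by apply: cube_pm => l; rewrite e_entry; case: (l == _); auto.
  have [x1 [_ hx1]] := (Hsurj _).1 C1.
  have [x2 [_ hx2]] := (Hsurj _).1 C2.
  have := Zv x1; have := Zv x2; rewrite !hg hx1 hx2 !entryB !e_entry eqxx.
  move/eqP; rewrite subr_eq0 => /eqP E2 /eqP; rewrite subr_eq0 => /eqP E1.
  have := etrans E1 (esym E2); move/eqP; by rewrite (negbTE (@ccN R)).
pose s := perm phi_inj.
have col : forall k, g 'e_k 0 (phi k) != 0.
  move=> k.
  have [r' nz] : exists r', g 'e_k 0 r' != 0.
    case: (boolP [exists r', g 'e_k 0 r' != 0]) => [/existsP //|].
    rewrite negb_exists => /forallP H0.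
    have g0 : g 'e_k = 0.
      by apply/rowP => l; rewrite mxE; apply/eqP; rewrite -[_ == _]negbK H0.
    have := Hiso 'e_k 0; rewrite -hg g0 subr0 sqnorm0 => /esym /sqnorm_eq0.
    move/rowP/(_ k); rewrite !mxE !eqxx /= => /eqP; by rewrite oner_eq0.
  case: (eqVneq r' (phi k)) => [<- //|ne].
  pose i := (s^-1)%g r'.
  have ri : r' = phi i by rewrite -(permE phi_inj) /i permKV.
  have ik : k != i by apply/eqP => ki; move: ne; rewrite ri ki eqxx.
  by move: nz; rewrite ri (Hphi i).1 // eqxx.
exists s => i k; rewrite !permE.
case: (eqVneq k i) => [->|ki]; first by rewrite HA HB.
apply: esym; apply: F2eq.
apply: (Hphi i).2 => //.
by rewrite (inj_eq phi_inj).
Qed.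

End Fwd.

Lemma permconj n (s : 'S_n) (M : 'M['F_2]_n) a b :
  (invmx (perm_mx s) *m M *m perm_mx s) a b = M ((s^-1)%g a) ((s^-1)%g b).
Proof.
have U : (perm_mx s : 'M['F_2]_n) \in unitmx := @unitmx_perm _ n s.
have -> : invmx (perm_mx s) = perm_mx (s^-1)%g :> 'M['F_2]_n.
  by rewrite -[RHS]mul1mx -(mulVmx U) -mulmxA -perm_mxM mulgV perm_mx1 mulmx1.
rewrite -row_permE.
have -> : perm_mx s = perm_mx ((s^-1)^-1)%g :> 'M['F_2]_n by rewrite invgK.
by rewrite -col_permE !mxE.
Qed.

Section Bwd.
Variables (R : realFieldType) (n : nat).

Lemma bwd (s : 'S_n) (A B : 'M['F_2]_n) :
  (forall a b, B a b = A ((s^-1)%g a) ((s^-1)%g b)) ->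
  equiv_pairing (pairingA R A) (pairingA R B).
Proof.
move=> HB; pose t := (s^-1)%g.
exists (fun x : 'rV[R]_n => \row_i x 0 (t i)); split; [split|].
- move=> x y; rewrite /sqnorm [RHS](reindex_inj (@perm_inj _ t)).
  by apply: eq_bigr => i _; rewrite !mxE.
- move=> y; split.
  + move=> Hy; exists (\row_k y 0 (s k)); split.
      by move=> l; rewrite mxE; exact: Hy.
    by apply/rowP => i; rewrite !mxE /t permKV.
  + by move=> [x [Hx <-]] l; rewrite mxE; exact: Hx.
- move=> [b i]; exists (b, s i); split.
  + move=> y; split.
    * move=> [Hy Hyi]; exists (\row_k y 0 (s k)); split; [split|].
      - by move=> l; rewrite mxE; exact: Hy.
      - by rewrite mxE; exact: Hyi.
      - by apply/rowP => l; rewrite !mxE /t permKV.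
    * move=> [x [[Hx Hxi] <-]]; split.
      - by move=> l; rewrite mxE; exact: Hx.
      - by rewrite /= mxE /t permK; exact: Hxi.
  + move=> x _; apply/rowP => l; rewrite /= /tauA !mxE HB /t permK.
    have -> : (l == s i) = ((s^-1)%g l == i)
      by rewrite -(inj_eq (@perm_inj _ s)) permKV.
    by [].
Qed.

End Bwd.

Unset Implicit Arguments.
Theorem mainTheorem9 (R : realFieldType) (n : nat) (A B : 'M['F_2]_n) :
  (forall i, A i i = 0) -> (forall i, B i i = 0) ->
  (equiv_pairing (pairingA R A) (pairingA R B) <->
   exists P : 'M['F_2]_n, (exists s : 'S_n, P = perm_mx s) /\
     B = invmx P *m A *m P).
Proof.
move=> HA HB; split.
- move=> H; have [s Hs] := fwd HA HB H.
  exists (perm_mx s); split; first by exists s.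
  apply/matrixP => a b; rewrite permconj.
  by rewrite -{1}(permKV s a) -{1}(permKV s b) Hs.
- move=> [P [[s ->] HBe]]; apply: (@bwd R n s) => a b.
  by rewrite HBe permconj.
Qed.
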